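(* Let $m\geq1$ and $c$ be integers with $0<c<m$ and $2c\neq m$. Then for all integers $n\geq0$, $$p^c_m(n)+\sum_{j\geq1}(-1)^j\left(p^c_m\!\left(n-\tfrac{mj^2+(m-2c)j}{2}\right)+p^c_m\!\left(n-\tfrac{mj^2-(m-2c)j}{2}\right)\right)=\begin{cases}1,&\text{if } n=m\,\frac{j(3j-1)}{2}\text{ for some even } j\in\mathbb{Z},\\-1,&\text{if } n=m\,\frac{j(3j-1)}{2}\text{ for some odd } j\in\mathbb{Z},\\0,&\text{otherwise,}\end{cases}$$ i.e. $p^c_m(n)-p^c_m(n-(m-c))-p^c_m(n-c)+p^c_m(n-(3m-2c))+p^c_m(n-(m+2c))-\cdots$ equals the right-hand side above.
   Context: $p^c_m(n)$ denotes the number of partitions of $n$ all of whose parts are congruent to $c$ or $-c$ modulo $m$, with $p^c_m(0)=1$ and $p^c_m(k)=0$ for $k<0$; its generating function is $\prod_{k\ge1}\frac{1}{(1-q^{mk-c})(1-q^{mk-(m-c)})}$. The numbers $j(3j-1)/2$, $j\in\mathbb{Z}$, are the (generalized) pentagonal numbers, which are distinct for distinct $j$. *)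

(* Defs.v *)
From mathcomp Require Import all_boot all_algebra.
Set Implicit Arguments. Unset Strict Implicit. Unset Printing Implicit Defensive.
Import GRing.Theory Num.Theory.

(* A partition of n is encoded by its multiplicity function f : part i |-> f i,
   with \sum_i i * f i = n.  Parts and multiplicities are <= n, so 'I_n.+1 suffices. *)
Definition allowed_part (m c i : nat) : bool :=
  (0 < i) && ((i == c %[mod m]) || (i + c == 0 %[mod m])).

Definition pcm (m c n : nat) : nat :=
  #|[set f : {ffun 'I_n.+1 -> 'I_n.+1} |
      (\sum_(i < n.+1) i * f i == n)%N && [forall i, (f i != ord0) ==> allowed_part m c i]]|.

Local Open Scope ring_scope.
Definition pcmZ (m c : nat) (k : int) : int :=
  if (k < 0)%R then 0%R else (pcm m c `|k|%N)%:Z.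

Definition pent (j : int) : int := ((j * (3 * j - 1)) %/ 2)%Z.

(* Main.v *)
Require Import Defs.
From mathcomp Require Import all_boot all_algebra.
From mathcomp Require Import ring lra zify.
Import GRing.Theory Num.Theory.
Local Open Scope ring_scope.

Definition eqm (N : nat) (p q : {poly int}) := forall i, (i <= N)%N -> p`_i = q`_i.

Lemma eqm_refl N p : eqm N p p. Proof. by []. Qed.
Lemma eqm_sym N p q : eqm N p q -> eqm N q p. Proof. by move=> h i hi; rewrite h. Qed.
Lemma eqm_trans N p q r : eqm N p q -> eqm N q r -> eqm N p r.
Proof. by move=> h1 h2 i hi; rewrite h1 // h2. Qed.
Lemma eqmD N p1 q1 p2 q2 : eqm N p1 q1 -> eqm N p2 q2 -> eqm N (p1 + p2) (q1 + q2).
Proof. by move=> h1 h2 i hi; rewrite !coefD h1 // h2. Qed.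
Lemma eqmN N p q : eqm N p q -> eqm N (- p) (- q).
Proof. by move=> h i hi; rewrite !coefN h. Qed.
Lemma eqmM N p1 q1 p2 q2 : eqm N p1 q1 -> eqm N p2 q2 -> eqm N (p1 * p2) (q1 * q2).
Proof.
move=> h1 h2 i hi; rewrite !coefM; apply: eq_bigr => j _.
rewrite h1; last by apply: leq_trans hi; rewrite -ltnS.
by rewrite h2 // (leq_trans (leq_subr _ _) hi).
Qed.
Lemma eqm_prod N (I : Type) (r : seq I) (P : pred I) (F G : I -> {poly int}) :
  (forall i, P i -> eqm N (F i) (G i)) -> eqm N (\prod_(i <- r | P i) F i) (\prod_(i <- r | P i) G i).
Proof. by move=> h; apply: (big_ind2 (eqm N)) => //; apply: eqmM. Qed.
Lemma eqm_sum N (I : Type) (r : seq I) (P : pred I) (F G : I -> {poly int}) :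
  (forall i, P i -> eqm N (F i) (G i)) -> eqm N (\sum_(i <- r | P i) F i) (\sum_(i <- r | P i) G i).
Proof. by move=> h; apply: (big_ind2 (eqm N)) => //; apply: eqmD. Qed.
Lemma eqm_Xn N e : (N < e)%N -> eqm N 'X^e 0.
Proof. move=> he i hi; rewrite coefXn coef0; case: eqP => // ?; subst; lia. Qed.
Lemma eqm_1Xn N e : (N < e)%N -> eqm N (1 - 'X^e) 1.
Proof. move=> he; rewrite -[X in eqm _ _ X]subr0; apply: eqmD => //; apply: eqmN; exact: eqm_Xn. Qed.
Lemma eqm_prod1 N (I : Type) (r : seq I) (P : pred I) (F : I -> {poly int}) :
  (forall i, P i -> eqm N (F i) 1) -> eqm N (\prod_(i <- r | P i) F i) 1.
Proof. move=> h; rewrite -[X in eqm _ _ X](@big1 _ 1 *%R I r P (fun _ => 1)) //; exact: eqm_prod. Qed.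
Lemma eqm_sum0 N (I : Type) (r : seq I) (P : pred I) (F : I -> {poly int}) :
  (forall i, P i -> eqm N (F i) 0) -> eqm N (\sum_(i <- r | P i) F i) 0.
Proof. move=> h; rewrite -[X in eqm _ _ X](@big1 _ 0 +%R I r P (fun _ => 0)) //; exact: eqm_sum. Qed.

Fixpoint gb {R : comRingType} (Q : R) (a b : nat) : R :=
  match a with
  | 0 => if b is 0 then 1 else 0
  | a'.+1 => match b with 0 => 1 | b'.+1 => gb Q a' b' + Q ^+ b * gb Q a' b end
  end.

Lemma gb0 {R : comRingType} (Q : R) a : gb Q a 0 = 1. Proof. by case: a. Qed.
Lemma gbS {R : comRingType} (Q : R) a b : gb Q a.+1 b.+1 = gb Q a b + Q ^+ b.+1 * gb Q a b.+1. Proof. by []. Qed.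
Lemma gb_gt {R : comRingType} (Q : R) a b : (a < b)%N -> gb Q a b = 0.
Proof.
elim: a b => [|a IH] [|b] //= hb.
by rewrite !IH ?mulr0 ?addr0 //; lia.
Qed.

Lemma bump0 i : bump 0 i = i.+1. Proof. by []. Qed.
Arguments gb : simpl never.

Lemma qbinom {R : comRingType} (Q : R) N (x y : R) :
  \prod_(i < N) (y + x * Q ^+ i) =
  \sum_(j < N.+1) Q ^+ 'C(j, 2) * gb Q N j * x ^+ j * y ^+ (N - j).
Proof.
elim: N x => [|N IH] x.
  by rewrite big_ord0 big_ord1 /= !expr0 !mulr1.
rewrite big_ord_recl expr0 mulr1.
under eq_bigr do rewrite /bump /= exprS mulrA.
rewrite IH.
set S := \sum_(j < N.+1) _.
have -> : \sum_(j < N.+2) Q ^+ 'C(j, 2) * gb Q N.+1 j * x ^+ j * y ^+ (N.+1 - j)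
  = y ^+ N.+1 + \sum_(j < N.+1) Q ^+ 'C(j.+1, 2) * gb Q N j * x ^+ j.+1 * y ^+ (N - j)
    + \sum_(j < N.+1) Q ^+ 'C(j.+1, 2) * (Q ^+ j.+1 * gb Q N j.+1) * x ^+ j.+1 * y ^+ (N - j).
  rewrite big_ord_recl /= gb0 !expr0 !mul1r subn0 -addrA; congr (_ + _).
  rewrite -big_split /=; apply: eq_bigr => j _.
  by rewrite /bump /= add1n gbS subSS; ring.
rewrite mulrDl -addrA [X in _ = _ + X]addrC addrA; congr (_ + _); last first.
  rewrite /S mulr_sumr; apply: eq_bigr => j _.
  rewrite binS bin1 exprD exprMn exprS; ring.
rewrite /S mulr_sumr big_ord_recl; congr (_ + _).
  by rewrite /= gb0 subn0 exprS; ring.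
rewrite big_ord_recr /= gb_gt // !(mulr0, mul0r) addr0.
apply: eq_bigr => j _; rewrite bump0 binS bin1 exprD !exprMn !exprS.
have -> : (N - j = (N - j.+1).+1)%N by have := ltn_ord j; lia.
rewrite exprS; ring.
Qed.

Lemma gb_prod {R : comRingType} (Q : R) a b : (b <= a)%N ->
  gb Q a b * \prod_(1 <= k < b.+1) (1 - Q ^+ k) = \prod_(a.+1 - b <= i < a.+1) (1 - Q ^+ i).
Proof.
elim: a b => [|a IH] [|b] hb.
- by rewrite gb0 !big_geq // mulr1.
- by [].
- by rewrite gb0 subn0 !big_geq // mulr1.
have -> : (a.+2 - b.+1 = a.+1 - b)%N by lia.
set A := \prod_(a.+1 - b <= i < a.+1) (1 - Q ^+ i).
have e1 : gb Q a b * \prod_(1 <= k < b.+2) (1 - Q ^+ k) = A * (1 - Q ^+ b.+1).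
  by rewrite big_nat_recr //= mulrA IH.
rewrite [in RHS]big_nat_recr /=; last lia.
rewrite gbS mulrDl e1.
case: (ltnP b a) => hba.
  rewrite -mulrA IH //.
  rewrite (@big_ltn _ _ _ (a.+1 - b.+1)); last lia.
  have -> : (a.+1 - b.+1).+1 = (a.+1 - b)%N by lia.
  rewrite -/A.
  have -> : Q ^+ a.+1 = Q ^+ b.+1 * Q ^+ (a.+1 - b.+1) by rewrite -exprD; congr (_ ^+ _); lia.
  rewrite mulrDr mulr1 mulrN mulrDr mulr1 mulrN mulrDl mul1r mulNr; ring.
have eb : b = a by lia.
subst b.
rewrite gb_gt // !(mulr0, mul0r) addr0.
by [].
Qed.
Arguments gb : simpl never.

Local Open Scope ring_scope.

Lemma binD2 a b : 'C(a + b, 2) = ('C(a, 2) + 'C(b, 2) + a * b)%N.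
Proof.
elim: b => [|b IH]; first by rewrite addn0 bin0n muln0 !addn0.
by rewrite addnS binS IH bin1 binS bin1; lia.
Qed.

Lemma jtp_gen {R : comRingType} (Q z : R) n :
  \prod_(i < n) (Q ^+ n - z * Q ^+ i) * \prod_(i < n) (Q ^+ n - z * Q ^+ (n + i))
  = \sum_(j < (n + n).+1) (-1) ^+ j * Q ^+ ('C(j, 2) + n * (n + n - j)) * gb Q (n + n)%N j * z ^+ j.
Proof.
have := qbinom Q (n + n) (- z) (Q ^+ n).
rewrite big_split_ord /=.
under eq_bigr do rewrite mulNr.
under [X in _ * X = _]eq_bigr do rewrite mulNr.
move=> ->.
apply: eq_bigr => j _.
rewrite exprD exprM (exprNn z). ring.
Qed.

Lemma bin2x2 n : ('C(n, 2) * 2 = n * n.-1)%N.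
Proof. elim: n => // n IH; rewrite binS bin1 mulnDl IH; case: n {IH} => //= n; lia. Qed.

Definition Ep m c k := (m * 'C(k, 2) + c * k)%N.
Definition Em m c l := (m * 'C(l.+1, 2) + (m - c) * l.+1)%N.

Lemma sum_lin s m c n : (\sum_(0 <= i < n) s * (m * i + c) = s * (m * 'C(n, 2) + c * n))%N.
Proof.
elim: n => [|n IH]; first by rewrite big_geq // !muln0.
rewrite big_nat_recr //= IH binS bin1; ring.
Qed.

Lemma neg1_sq (R : ringType) k : ((-1) ^+ k * (-1) ^+ k = 1 :> R).
Proof. by rewrite -exprD addnn -mul2n exprM sqrrN expr1n expr1n. Qed.

Lemma ex2 s c d r l Cr Cl : (Cl * 2 = l.+1 * l)%N ->
 (s*(c+d)*(Cr + (r+l.+1)*((r+l.+1) + l.+1)) + s*c*r = s*((c+d)*(r+l.+1)*(r+l.+1) + (c+d)*(Cr + Cl + r*l.+1) + c*(r+l.+1)) + s*((c+d)*Cl + d*l.+1))%N.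
Proof. move=> h. nia. Qed.

Lemma split_sum n (G : nat -> {poly int}) :
  \sum_(j < (n + n).+1) G j = \sum_(0 <= j < n) G j + \sum_(0 <= k < n.+1) G (n + k)%N.
Proof.
rewrite -(big_mkord xpredT G) (@big_cat_nat _ _ _ n 0 (n + n).+1) /= //; last lia.
congr (_ + _).
rewrite -{1}[n]add0n big_addn.
have -> : ((n + n).+1 - n = n.+1)%N by lia.
by apply: eq_big_nat => k _; rewrite addnC.
Qed.

Lemma jtp_fin s m c n : (0 < c)%N -> (c < m)%N ->
  (\prod_(0 <= i < n) (1 - 'X^(s * (m * i + c))) * \prod_(0 <= i < n) (1 - 'X^(s * (m * i.+1 - c))) : {poly int})
  = \sum_(0 <= k < n.+1) (-1) ^+ k * 'X^(s * Ep m c k) * gb 'X^(s * m) (n + n)%N (n + k)%N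
  + \sum_(0 <= l < n) (-1) ^+ l.+1 * 'X^(s * Em m c l) * gb 'X^(s * m) (n + n)%N (n - l.+1)%N.
Proof.
move=> hc hcm.
have key := jtp_gen ('X^(s * m) : {poly int}) 'X^(s * c) n.
set A := (m * n * n + m * 'C(n, 2) + c * n)%N.
set LL := _ * _; set RR := _ + _.
have nz : (-1) ^+ n * 'X^(s * A) != 0 :> {poly int}.
  by rewrite mulf_neq0 ?signr_eq0 // expf_neq0 // polyX_eq0.
apply: (mulfI nz).
have e1 : (\prod_(i < n) ('X^(s * m) ^+ n - 'X^(s * c) * 'X^(s * m) ^+ i) : {poly int})
   = (-1) ^+ n * 'X^(s * (m * 'C(n, 2) + c * n)) * \prod_(0 <= i < n) (1 - 'X^(s * (m * i.+1 - c))).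
  have t1 : forall i : 'I_n, ('X^(s * m) ^+ n - 'X^(s * c) * 'X^(s * m) ^+ i : {poly int})
      = (-1) * 'X^(s * (m * i + c)) * (1 - 'X^(s * (m * (n - i) - c))).
    move=> i; have hi := ltn_ord i.
    rewrite -!exprM -exprD.
    have -> : (s * m * n = s * (m * i + c) + s * (m * (n - i) - c))%N.
      have : (c <= m * (n - i))%N by nia.
      move: (nat_of_ord i) hi => k hk hh.
      have -> : (n = k + (n - k))%N by lia.
      move: (n - k)%N hh => r hh; rewrite addKn; nia.
    have -> : (s * c + s * m * i = s * (m * i + c))%N by nia.
    rewrite exprD; ring.
  rewrite (eq_bigr _ (fun i _ => t1 i)) big_split big_split /= prodr_const card_ord.
  rewrite prodrXr -(big_mkord xpredT (fun i => s * (m * i + c))%N) sum_lin. congr (_ * _).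
  rewrite -(big_mkord xpredT (fun i => 1 - 'X^(s * (m * (n - i) - c)))) big_nat_rev /=.
  apply: eq_big_nat => i hi; rewrite add0n.
  by have -> : (n - (n - i.+1) = i.+1)%N by lia.

have e2 : (\prod_(i < n) ('X^(s * m) ^+ n - 'X^(s * c) * 'X^(s * m) ^+ (n + i)) : {poly int})
   = 'X^(s * (m * n * n)) * \prod_(0 <= i < n) (1 - 'X^(s * (m * i + c))).
  have t2 : forall i : 'I_n, ('X^(s * m) ^+ n - 'X^(s * c) * 'X^(s * m) ^+ (n + i) : {poly int})
      = 'X^(s * (m * n)) * (1 - 'X^(s * (m * i + c))).
    move=> i; rewrite -!exprM -exprD mulrBr mulr1 -exprD.
    have -> : (s * m * n = s * (m * n))%N by nia.
    have -> : (s * c + s * m * (n + i) = s * (m * n) + s * (m * i + c))%N by nia.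
    by [].
  rewrite (eq_bigr _ (fun i _ => t2 i)) big_split /= prodr_const card_ord -exprM big_mkord.
  by have -> : (s * (m * n) * n = s * (m * n * n))%N by nia.

have eL : (-1) ^+ n * 'X^(s * A) * LL = \prod_(i < n) ('X^(s * m) ^+ n - 'X^(s * c) * 'X^(s * m) ^+ i) *
         \prod_(i < n) ('X^(s * m) ^+ n - 'X^(s * c) * 'X^(s * m) ^+ (n + i)).
  rewrite e1 e2 /LL /A !mulnDr !exprD; ring.
rewrite eL key (split_sum n (fun j => (-1) ^+ j * 'X^(s * m) ^+ ('C(j, 2) + n * (n + n - j)) * gb 'X^(s * m) (n + n)%N j * 'X^(s * c) ^+ j)) /RR mulrDr addrC; congr (_ + _).
  rewrite mulr_sumr; apply: eq_big_nat => k /andP [_ hk].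
  have ex : (s * m * ('C(n + k, 2) + n * (n + n - (n + k))) + s * c * (n + k) = s * A + s * Ep m c k)%N.
    rewrite binD2 /A /Ep.
    have -> : (n + n - (n + k) = n - k)%N by lia.
    move: (bin2x2 n) (bin2x2 k) => h1 h2.
    have -> : (n = k + (n - k))%N by lia.
    move: (n - k)%N => r; rewrite addKn; nia.
  transitivity ((-1) ^+ n * (-1) ^+ k * 'X^(s * A + s * Ep m c k) * gb 'X^(s * m) (n + n)%N (n + k)%N : {poly int}).
    by rewrite -ex -!exprM exprD (exprD 'X); ring.
  by rewrite exprD; ring.
rewrite mulr_sumr big_nat_rev /=; apply: eq_big_nat => l /andP [_ hl].
rewrite add0n.
have ex : (s * m * ('C(n - l.+1, 2) + n * (n + n - (n - l.+1))) + s * c * (n - l.+1) = s * A + s * Em m c l)%N.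
  have [r hr] : exists r, n = (r + l.+1)%N by exists (n - l.+1)%N; lia.
  have [d hd] : exists d, m = (c + d)%N by exists (m - c)%N; lia.
  rewrite /A /Em hr hd addnK binD2 addKn.
  have -> : (r + l.+1 + (r + l.+1) - r = r + l.+1 + l.+1)%N by lia.
  exact: ex2 (bin2x2 l.+1).
have sg : ((-1) ^+ (n - l.+1) = (-1) ^+ n * (-1) ^+ l.+1 :> {poly int}).
  have -> : n = ((n - l.+1) + l.+1)%N by lia.
  by rewrite exprD -mulrA neg1_sq mulr1 addnK.
transitivity ((-1) ^+ n * (-1) ^+ l.+1 * 'X^(s * A + s * Em m c l) * gb 'X^(s * m) (n + n)%N (n - l.+1)%N : {poly int}).
  by rewrite -ex -!exprM sg (exprD 'X); ring.
by rewrite exprD; ring.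
Qed.

Local Open Scope ring_scope.

Lemma eqm_Xn_mul N e p : (N < e)%N -> eqm N ('X^e * p) 0.
Proof. move=> he; rewrite -(mul0r p); apply: eqmM => //; exact: eqm_Xn. Qed.

Lemma eqm_prod1_nat N a b (F : nat -> {poly int}) :
  (forall k, (a <= k < b)%N -> eqm N (F k) 1) -> eqm N (\prod_(a <= k < b) F k) 1.
Proof. by move=> h; rewrite big_nat_cond; apply: eqm_prod1 => k /andP [hk _]; apply: h. Qed.
Lemma eqm_sum0_nat N a b (F : nat -> {poly int}) :
  (forall k, (a <= k < b)%N -> eqm N (F k) 0) -> eqm N (\sum_(a <= k < b) F k) 0.
Proof. by move=> h; rewrite big_nat_cond; apply: eqm_sum0 => k /andP [hk _]; apply: h. Qed.
Lemma eqm_sum_nat N a b (F G : nat -> {poly int}) :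
  (forall k, (a <= k < b)%N -> eqm N (F k) (G k)) -> eqm N (\sum_(a <= k < b) F k) (\sum_(a <= k < b) G k).
Proof. by move=> h; rewrite big_nat_cond [X in eqm _ _ X]big_nat_cond; apply: eqm_sum => k /andP [hk _]; apply: h. Qed.

Lemma prod_trunc N M L (F : nat -> {poly int}) : (L <= M)%N ->
  (forall k, (L <= k)%N -> eqm N (F k) 1) ->
  eqm N (\prod_(0 <= k < M) F k) (\prod_(0 <= k < L) F k).
Proof.
move=> hLM h; rewrite (@big_cat_nat _ _ _ L) //= -[X in eqm _ _ X]mulr1.
apply: eqmM => //; apply: eqm_prod1_nat => k /andP [hk _]; exact: h.
Qed.

Definition QQ s m M : {poly int} := \prod_(0 <= k < M) (1 - 'X^(s * m) ^+ k.+1).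

Lemma QQ_trunc N s m M L : (0 < s * m)%N -> (N <= M)%N -> (N <= L)%N -> eqm N (QQ s m M) (QQ s m L).
Proof.
move=> hsm hM hL; rewrite /QQ.
have h : forall k, (N <= k)%N -> eqm N (1 - 'X^(s * m) ^+ k.+1) 1.
  move=> k hk; rewrite -exprM; apply: eqm_1Xn; nia.
pose F : nat -> {poly int} := fun k => 1 - 'X^(s * m) ^+ k.+1.
apply: eqm_trans (@prod_trunc N M N F hM h) _; apply: eqm_sym; exact: (@prod_trunc N L N F hL h).
Qed.

Lemma gb_trunc N s m a b M : (0 < s * m)%N -> (b <= a)%N -> (N <= a - b)%N -> (N <= b)%N -> (N <= M)%N ->
  eqm N (gb 'X^(s * m) a b * QQ s m M) 1.
Proof.
move=> hsm hba h1 h2 hM.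
apply: eqm_trans; first (apply: eqmM; [exact: eqm_refl | exact: (QQ_trunc N s m M b hsm hM h2)]).
have -> : QQ s m b = \prod_(1 <= k < b.+1) (1 - 'X^(s * m) ^+ k) by rewrite /QQ big_add1.
rewrite gb_prod //; apply: eqm_prod1_nat => i /andP [hi _].
rewrite -exprM; apply: eqm_1Xn; nia.
Qed.

Definition Theta s m c N : {poly int} :=
  \sum_(0 <= k < N.+1) (-1) ^+ k * 'X^(s * Ep m c k) +
  \sum_(0 <= k < N.+1) (-1) ^+ k.+1 * 'X^(s * Em m c k).

Lemma Ep_ge m c k : (0 < c)%N -> (k <= Ep m c k)%N.
Proof. rewrite /Ep => hc; nia. Qed.
Lemma Em_ge m c k : (c < m)%N -> (k < Em m c k)%N.
Proof. rewrite /Em => hc; nia. Qed.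

Lemma rearr (a b g q : {poly int}) : q * (a * b * g) = a * b * (g * q).
Proof. ring. Qed.
Lemma rearr2 (a b g q : {poly int}) : q * (a * b * g) = b * (a * g * q).
Proof. ring. Qed.

Lemma jtp_trunc s m c N M : (0 < s)%N -> (0 < c)%N -> (c < m)%N -> (N <= M)%N ->
  eqm N (QQ s m M * (\prod_(0 <= i < (N + N).+2) (1 - 'X^(s * (m * i + c))) *
                     \prod_(0 <= i < (N + N).+2) (1 - 'X^(s * (m * i.+1 - c)))))
        (Theta s m c N).
Proof.
move=> hs hc hcm hM.
have hsm : (0 < s * m)%N by nia.
rewrite jtp_fin // mulrDr /Theta; apply: eqmD.
  rewrite mulr_sumr (@big_cat_nat _ _ _ N.+1) //=; last lia.
  rewrite -[X in eqm _ _ X]addr0; apply: eqmD.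
    apply: eqm_sum_nat => k /andP [_ hk].
    rewrite rearr -[X in eqm _ _ X]mulr1; apply: eqmM => //.
    apply: gb_trunc => //; lia.
  apply: eqm_sum0_nat => k /andP [hk _].
  rewrite rearr2; apply: eqm_Xn_mul.
  have := Ep_ge m c k hc; nia.
rewrite mulr_sumr (@big_cat_nat _ _ _ N.+1) //=; last lia.
rewrite -[X in eqm _ _ X]addr0; apply: eqmD.
  apply: eqm_sum_nat => k /andP [_ hk].
  rewrite rearr -[X in eqm _ _ X]mulr1; apply: eqmM => //.
  apply: gb_trunc => //; lia.
apply: eqm_sum0_nat => k /andP [hk _].
rewrite rearr2; apply: eqm_Xn_mul.
have := Em_ge m c k hcm; nia.
Qed.

Local Open Scope ring_scope.

Definition Sfac m c (t i : nat) : {poly int} :=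
  \sum_(u < t.+1) (if (u == 0%N :> nat) || allowed_part m c i then 'X^(i * u) else 0).
Definition Pgen m c t : {poly int} := \prod_(i < t.+1) Sfac m c t i.

Lemma Pgen_coef m c t : (Pgen m c t)`_t = (pcm m c t)%:Z.
Proof.
rewrite /Pgen /Sfac bigA_distr_bigA coef_sum.
pose ok (f : {ffun 'I_t.+1 -> 'I_t.+1}) := [forall i, (f i != ord0) ==> allowed_part m c i].
have e : forall f : {ffun 'I_t.+1 -> 'I_t.+1},
   (\prod_(i < t.+1) (if (f i == 0%N :> nat) || allowed_part m c i then 'X^(i * f i) else 0 : {poly int}))`_t
   = if ((\sum_(i < t.+1) i * f i == t)%N && ok f) then 1 else 0.
  move=> f; case: (boolP (ok f)) => hok.
    rewrite (eq_bigr (fun i : 'I_t.+1 => 'X^(i * f i))); last first.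
      move=> i _; move/forallP: hok => /(_ i).
      by case: eqP => [->|] //= hne ->; rewrite orbT.
    by rewrite prodrXr coefXn andbT eq_sym; case: (_ == _).
  move/forallPn: hok => [i]; rewrite negb_imply => /andP [hfi hal].
  rewrite (bigD1 i) //= ifF; first by rewrite mul0r coef0 andbF.
  by apply/negbTE; rewrite negb_or hal andbT.
rewrite (eq_bigr _ (fun f _ => e f)).
rewrite -big_mkcond /= sumr_const /pcm. rewrite natz; congr Posz.
by apply: eq_card => f; rewrite inE.
Qed.

Local Open Scope nat_scope.
Lemma allowed_block m c L r : (0 < c)%N -> (c < m)%N -> (r < m)%N ->
  allowed_part m c (m * L + r)%N = (r == c) || (r == m - c)%N.
Proof.
move=> hc hcm hr; rewrite /allowed_part.
rewrite -modnDm modnMr add0n (modn_small hr) (modn_small hcm) mod0n.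
rewrite -addnA -modnDm modnMr add0n modn_mod.
rewrite ?(modn_small hr) ?(modn_small hcm).
case: (ltnP (r + c) m) => h.
  rewrite (modn_small h).
  have -> : (r + c == 0) = false by apply/eqP; lia.
  have -> : (r == m - c) = false by apply/eqP; lia.
  case: (eqVneq r c) => [->|hrc] /=; last by rewrite andbF.
  by rewrite andbT; apply/ltP; lia.
have -> : (r + c = (r + c - m) + m)%N by lia.
rewrite modnDr modn_small; last lia.
case: (eqVneq r c) => [->|hrc] /=.
  by rewrite andbT; apply/ltP; lia.
case: (eqVneq r (m - c)) => [->|hrm] /=.
  have -> : (m - c + c - m = 0)%N by lia.
  by rewrite eqxx andbT; apply/ltP; lia.
have -> : (r + c - m == 0) = false by apply/eqP; lia.
by rewrite andbF.
Qed.

Local Open Scope ring_scope.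
Definition Tm m c i (u : nat) : {poly int} := if (u == 0%N) || allowed_part m c i then 'X^(i * u) else 0.

Lemma Sfac_nat m c t i : Sfac m c t i = \sum_(0 <= u < t.+1) Tm m c i u.
Proof. by rewrite big_mkord. Qed.

Lemma allowed0 m c : allowed_part m c 0 = false.
Proof. by []. Qed.

Lemma T_small m c t i u : (0 < u)%N -> (t < u)%N || (t < i)%N -> eqm t (Tm m c i u) 0.
Proof.
move=> hu h; rewrite /Tm; case: ifP => hc //.
have hi : (0 < i)%N.
  case: i hc {h} => //; rewrite allowed0 orbF; case: u hu => //.
apply: eqm_Xn; nia.
Qed.

Lemma Sfac_trunc m c t N i : (t <= N)%N -> eqm t (Sfac m c N i) (Sfac m c t i).
Proof.
move=> htN; rewrite !Sfac_nat (@big_cat_nat _ _ _ t.+1) //=; try lia.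
rewrite -[X in eqm _ _ X]addr0; apply: eqmD => //.
apply: eqm_sum0_nat => u /andP [hu _]; apply: T_small => //; [lia | by rewrite hu].
Qed.

Lemma Sfac_big m c t i : (t < i)%N -> eqm t (Sfac m c t i) 1.
Proof.
move=> hi; rewrite Sfac_nat big_ltn // /Tm eqxx muln0 expr0 /= -[X in eqm _ _ X]addr0.
apply: eqmD => //; apply: eqm_sum0_nat => u /andP [hu _].
by apply: T_small => //; rewrite hi orbT.
Qed.

Lemma Pgen_trunc m c t N : (t <= N)%N -> eqm t (Pgen m c N) (Pgen m c t).
Proof.
move=> htN; rewrite /Pgen -!(big_mkord xpredT (Sfac m c _)) (@big_cat_nat _ _ _ t.+1) //=; try lia.
rewrite -[X in eqm _ _ X]mulr1; apply: eqmM.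
  by apply: eqm_prod => i _; apply: Sfac_trunc.
by apply: eqm_prod1_nat => i /andP [hi _]; apply: eqm_trans (Sfac_trunc m c t N i htN) (Sfac_big m c t i hi).
Qed.

Definition aa m c i : {poly int} := if allowed_part m c i then 'X^i else 0.

Lemma Sfac_inv m c N i : eqm N (Sfac m c N i * (1 - aa m c i)) 1.
Proof.
rewrite /aa; case: ifP => hal.
  have hi : (0 < i)%N by move: hal; rewrite /allowed_part => /andP [].
  rewrite /Sfac (eq_bigr (fun u : 'I_N.+1 => ('X^i) ^+ u)); last first.
    by move=> u _; rewrite hal orbT exprM.
  have -> : (\sum_(u < N.+1) ('X^i) ^+ u) * (1 - 'X^i) = 1 - ('X^i) ^+ N.+1 :> {poly int}.
    have e := subrX1 ('X^i : {poly int}) N.+1; by rewrite -[RHS]opprB e -mulNr opprB mulrC.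
  rewrite -exprM; apply: eqm_1Xn; nia.
rewrite subr0 mulr1 /Sfac big_ord_recl /= muln0 expr0 big1 ?addr0 // => u _.
by rewrite hal.
Qed.

Lemma Pgen_inv m c N : eqm N (Pgen m c N * \prod_(0 <= i < N.+1) (1 - aa m c i)) 1.
Proof.
rewrite big_mkord /Pgen -big_split /=; apply: eqm_prod1 => i _; exact: Sfac_inv.
Qed.

Lemma block_gen m L (F : nat -> {poly int}) :
  \prod_(0 <= i < m * L) F i = \prod_(0 <= k < L) \prod_(0 <= r < m) F (m * k + r)%N.
Proof.
elim: L => [|L IH]; first by rewrite muln0 !big_geq.
rewrite big_nat_recr //= -IH mulnS addnC (@big_cat_nat _ _ _ (m * L)%N) //=; try lia.
congr (_ * _).
rewrite -{1}[(m * L)%N]add0n big_addn addKn.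
by apply: eq_big_nat => r _; rewrite addnC.
Qed.

Lemma block_aa m c L : (0 < c)%N -> (c < m)%N -> (2 * c != m)%N ->
  \prod_(0 <= i < m * L) (1 - aa m c i) =
  \prod_(0 <= k < L) ((1 - 'X^(m * k + c)) * (1 - 'X^(m * k.+1 - c))).
Proof.
move=> hc hcm h2c; rewrite block_gen; apply: eq_big_nat => k _.
rewrite big_mkord.
have h1 : (c < m)%N by [].
have h2 : (m - c < m)%N by lia.
rewrite (bigD1 (Ordinal h1)) // (bigD1 (Ordinal h2)) /=; last first.
  by rewrite -val_eqE /=; apply/eqP; lia.
rewrite big1 ?mulr1.
  rewrite /aa !allowed_block // eqxx /=.
  have -> : ((m - c)%N == c) = false by apply/eqP; lia.
  rewrite eqxx orbT; congr (_ * (1 - 'X^_)); lia.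
move=> r /andP [h3 h4]; rewrite /aa allowed_block //.
move: h3 h4; rewrite -!val_eqE /= => /negbTE -> /negbTE ->.
by rewrite subr0.
Qed.

Lemma aa_trunc m c N L : (N.+1 <= L)%N ->
  eqm N (\prod_(0 <= i < L) (1 - aa m c i)) (\prod_(0 <= i < N.+1) (1 - aa m c i)).
Proof.
move=> hL; apply: prod_trunc => // i hi; rewrite /aa; case: ifP => _.
  apply: eqm_1Xn; lia.
by rewrite subr0.
Qed.

Local Open Scope ring_scope.

Lemma QQ_block m n0 :
  QQ 1 m (3 * n0) = QQ m 3 n0 * (\prod_(0 <= i < n0) (1 - 'X^(m * (3 * i + 1))) *
                                 \prod_(0 <= i < n0) (1 - 'X^(m * (3 * i.+1 - 1)))).
Proof.
rewrite /QQ block_gen -!big_split /=; apply: eq_big_nat => k _.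
rewrite big_ltn // big_ltn // big_ltn // big_geq // mulr1 -!exprM.
have -> : (1 * m * (3 * k + 0).+1 = m * (3 * k + 1))%N by rewrite mul1n addn0 addn1.
have -> : (1 * m * (3 * k + 1).+1 = m * (3 * k.+1 - 1))%N by rewrite mul1n; congr (m * _); lia.
have -> : (1 * m * (3 * k + 2).+1 = m * 3 * k.+1)%N by rewrite mul1n -mulnA; congr (m * _); lia.
ring.
Qed.

Lemma main_poly m c N : (0 < c)%N -> (c < m)%N -> (2 * c != m)%N ->
  eqm N (Pgen m c N * Theta 1 m c N) (Theta m 3 1 N).
Proof.
move=> hc hcm h2c.
set n0 := (N + N).+2.
have hm : (0 < m)%N by lia.
have s1 := jtp_trunc 1 m c N (3 * n0) isT hc hcm (ltac:(lia)).
have s4 := jtp_trunc m 3 1 N n0 hm isT isT (ltac:(lia)).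
apply: eqm_trans; first (apply: eqmM; [exact: eqm_refl | exact: eqm_sym s1]).
apply: eqm_trans s4.
rewrite -QQ_block mulrCA -[X in eqm _ _ X]mulr1; apply: eqmM => //.
have -> : \prod_(0 <= i < n0) (1 - 'X^(1 * (m * i + c))) *
   \prod_(0 <= i < n0) (1 - 'X^(1 * (m * i.+1 - c))) = \prod_(0 <= i < m * n0) (1 - aa m c i).
  by rewrite block_aa // -big_split /=; apply: eq_big_nat => k _; rewrite !mul1n.
apply: eqm_trans; first (apply: eqmM; [exact: eqm_refl | exact: (aa_trunc m c N (m * n0)%N (ltac:(nia)))]).
exact: Pgen_inv.
Qed.

Local Open Scope ring_scope.

Lemma binsq k : ('C(k, 2) * 2 + k = k * k)%N.
Proof. elim: k => // k IH; rewrite binS bin1; nia. Qed.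

Lemma coef_sign k (p : {poly int}) i : ((-1) ^+ k * p)`_i = (-1) ^+ k * p`_i.
Proof.
by rewrite -signr_odd [RHS]mulrC -[in RHS]signr_odd; case: (odd k); rewrite ?expr1 ?expr0 ?mulN1r ?mul1r ?mulrN1 ?mulr1 ?coefN.
Qed.

Definition Pz m c n e : int := if (n < e)%N then 0 else (pcm m c (n - e))%:Z.

Lemma coefPX m c n e : (Pgen m c n * 'X^(1 * e))`_n = Pz m c n e.
Proof.
rewrite mul1n coefMXn /Pz; case: ltnP => // h.
rewrite (Pgen_trunc m c (n - e)%N n (leq_subr _ _) (n - e)%N (leqnn _)).
by rewrite Pgen_coef.
Qed.

Lemma coef_left m c n : (Pgen m c n * Theta 1 m c n)`_n =
  \sum_(0 <= k < n.+1) (-1) ^+ k * Pz m c n (Ep m c k) +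
  \sum_(0 <= k < n.+1) (-1) ^+ k.+1 * Pz m c n (Em m c k).
Proof.
rewrite /Theta mulrDr coefD !mulr_sumr !coef_sum; congr (_ + _); apply: eq_bigr => k _;
  by rewrite mulrCA coef_sign coefPX.
Qed.

Lemma coef_right m n : (Theta m 3 1 n)`_n =
  \sum_(0 <= k < n.+1) (-1) ^+ k * (n == m * Ep 3 1 k)%N%:R +
  \sum_(0 <= k < n.+1) (-1) ^+ k.+1 * (n == m * Em 3 1 k)%N%:R.
Proof.
rewrite /Theta coefD !coef_sum; congr (_ + _); apply: eq_bigr => k _;
  by rewrite coef_sign coefXn.
Qed.

Local Open Scope ring_scope.

Lemma pcmZ_eq m c n e : pcmZ m c (n%:Z - e%:Z) = Pz m c n e.
Proof.
rewrite /pcmZ /Pz; case: ltnP => h.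
  by rewrite subr_lt0 ltz_nat h.
by rewrite subzn // ltz_nat ltn0 /=.
Qed.

Lemma binsqZ k : ('C(k, 2)%:Z * 2 + k%:Z = k%:Z * k%:Z).
Proof. by have := congr1 Posz (binsq k); rewrite PoszD !PoszM. Qed.

Lemma X2_eq m c j : (c <= m)%N ->
  ((m%:Z * j%:Z ^+ 2 - (m%:Z - 2 * c%:Z) * j%:Z) %/ 2)%Z = (Ep m c j)%:Z.
Proof.
move=> hcm.
have -> : (m%:Z * j%:Z ^+ 2 - (m%:Z - 2 * c%:Z) * j%:Z) = 2 * (Ep m c j)%:Z.
  rewrite /Ep PoszD !PoszM expr2 -binsqZ; ring.
by rewrite mulKz.
Qed.

Lemma X1_eq m c k : (c <= m)%N ->
  ((m%:Z * (k.+1)%:Z ^+ 2 + (m%:Z - 2 * c%:Z) * (k.+1)%:Z) %/ 2)%Z = (Em m c k)%:Z.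
Proof.
move=> hcm.
have -> : (m%:Z * (k.+1)%:Z ^+ 2 + (m%:Z - 2 * c%:Z) * (k.+1)%:Z) = 2 * (Em m c k)%:Z.
  rewrite /Em PoszD !PoszM -subzn // expr2 -binsqZ; ring.
by rewrite mulKz.
Qed.

Lemma pent_pos k : pent k%:Z = (Ep 3 1 k)%:Z.
Proof.
rewrite /pent.
have -> : k%:Z * (3 * k%:Z - 1) = 2 * (Ep 3 1 k)%:Z.
  rewrite /Ep PoszD !PoszM -[(k%:Z * (3 * k%:Z - 1))]/(k%:Z * (3 * k%:Z - 1)).
  have h := binsqZ k.
  have -> : k%:Z * (3 * k%:Z - 1) = 3 * (k%:Z * k%:Z) - k%:Z by ring.
  rewrite -h; ring.
by rewrite mulKz.
Qed.

Lemma pent_neg k : pent (- (k.+1)%:Z) = (Em 3 1 k)%:Z.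
Proof.
rewrite /pent.
have -> : - (k.+1)%:Z * (3 * - (k.+1)%:Z - 1) = 2 * (Em 3 1 k)%:Z.
  rewrite /Em PoszD !PoszM.
  have h := binsqZ k.+1.
  have -> : - (k.+1)%:Z * (3 * - (k.+1)%:Z - 1) = 3 * ((k.+1)%:Z * (k.+1)%:Z) + (k.+1)%:Z by ring.
  rewrite -h (_ : (3 - 1)%N = 2%N) //; ring.
by rewrite mulKz.
Qed.

Local Open Scope ring_scope.

Lemma Ep_step k : Ep 3 1 k.+1 = (Ep 3 1 k + 3 * k + 1)%N.
Proof. rewrite /Ep binS bin1; lia. Qed.
Lemma Em_step k : Em 3 1 k.+1 = (Em 3 1 k + 3 * k.+1 + 2)%N.
Proof. rewrite /Em binS bin1; lia. Qed.
Lemma Ep_mono a b : (a < b)%N -> (Ep 3 1 a < Ep 3 1 b)%N.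
Proof.
elim: b => // b IH; rewrite ltnS leq_eqVlt => /orP [/eqP ->|h]; rewrite Ep_step; first lia.
have := IH h; lia.
Qed.
Lemma Em_mono a b : (a < b)%N -> (Em 3 1 a < Em 3 1 b)%N.
Proof.
elim: b => // b IH; rewrite ltnS leq_eqVlt => /orP [/eqP ->|h]; rewrite Em_step; first lia.
have := IH h; lia.
Qed.
Lemma Ep_inj a b : (Ep 3 1 a == Ep 3 1 b) = (a == b).
Proof.
case: (ltngtP a b) => h; last by rewrite h eqxx.
  by have := Ep_mono _ _ h; lia.
by have := Ep_mono _ _ h; lia.
Qed.
Lemma Em_inj a b : (Em 3 1 a == Em 3 1 b) = (a == b).
Proof.
case: (ltngtP a b) => h; last by rewrite h eqxx.
  by have := Em_mono _ _ h; lia.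
by have := Em_mono _ _ h; lia.
Qed.
Lemma Em_Ep l : Em 3 1 l = (Ep 3 1 l.+1 + l.+1)%N.
Proof. rewrite /Em /Ep; lia. Qed.
Lemma Ep_Em k l : (Ep 3 1 k == Em 3 1 l) = false.
Proof.
apply/eqP; rewrite Em_Ep => e.
case: (leqP k l.+1) => h.
  have : (Ep 3 1 k <= Ep 3 1 l.+1)%N.
    by case: (ltngtP k l.+1) h => // h' _; [apply: ltnW; apply: Ep_mono | rewrite h'].
  lia.
have : (Ep 3 1 l.+2 <= Ep 3 1 k)%N.
  move: h; rewrite leq_eqVlt => /orP [/eqP <-|h'] //.
  exact: ltnW (Ep_mono _ _ h').
rewrite Ep_step; lia.
Qed.

Lemma sum_delta N k (F : nat -> int) (P : nat -> bool) : (forall i, P i = (i == k)) -> (k < N)%N ->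
  \sum_(0 <= i < N) F i * (P i)%:R = F k.
Proof.
move=> hP hk; rewrite big_mkord (bigD1 (Ordinal hk)) //= hP eqxx mulr1 big1 ?addr0 //.
by move=> i; rewrite -val_eqE /= hP => /negbTE ->; rewrite mulr0.
Qed.

Lemma sum_zero N (F : nat -> int) (P : nat -> bool) : (forall i, P i = false) ->
  \sum_(0 <= i < N) F i * (P i)%:R = 0.
Proof. by move=> hP; rewrite big1 // => i _; rewrite hP mulr0. Qed.

Local Open Scope ring_scope.

Theorem theorem8 (m c : nat) (hm : (1 <= m)%N) (hc0 : (0 < c)%N) (hcm : (c < m)%N)
    (h2c : (2 * c != m)%N) (n : nat) :
  let LHS : int :=
    pcmZ m c n%:Z +
    \sum_(1 <= j < n.+2)
      (-1) ^+ j *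
        (pcmZ m c (n%:Z - ((m%:Z * j%:Z ^+ 2 + (m%:Z - 2 * c%:Z) * j%:Z) %/ 2)%Z)
       + pcmZ m c (n%:Z - ((m%:Z * j%:Z ^+ 2 - (m%:Z - 2 * c%:Z) * j%:Z) %/ 2)%Z)) in
  (forall j : int, (2 %| j)%Z -> n%:Z = m%:Z * pent j -> LHS = 1) /\
  (forall j : int, ~~ (2 %| j)%Z -> n%:Z = m%:Z * pent j -> LHS = -1) /\
  ((forall j : int, n%:Z <> m%:Z * pent j) -> LHS = 0).
Proof.
move=> LHS.
have hcm' : (c <= m)%N by lia.
have eL : LHS = (Pgen m c n * Theta 1 m c n)`_n.
  rewrite coef_left /LHS big_add1 /=.
  under eq_big_nat => k _ do rewrite X1_eq // X2_eq // !pcmZ_eq.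
  have -> : pcmZ m c n%:Z = Pz m c n (Ep m c 0).
    by rewrite -pcmZ_eq (_ : Ep m c 0 = 0%N) ?subr0 // /Ep /= !muln0.
  have hz : Pz m c n (Ep m c n.+1) = 0.
    by rewrite /Pz; have := Ep_ge m c n.+1 hc0; case: ltnP => // h1 h2; lia.
  have hs : \sum_(0 <= k < n.+1) (-1) ^+ k.+1 * (Pz m c n (Em m c k) + Pz m c n (Ep m c k.+1))
     = \sum_(0 <= k < n.+1) (-1) ^+ k.+1 * Pz m c n (Em m c k)
       + \sum_(0 <= k < n) (-1) ^+ k.+1 * Pz m c n (Ep m c k.+1).
    under eq_big_nat => k _ do rewrite mulrDr.
    by rewrite big_split /= [X in _ + X = _]big_nat_recr //= hz mulr0 addr0.
  have hp : \sum_(0 <= k < n.+1) (-1) ^+ k * Pz m c n (Ep m c k)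
     = Pz m c n (Ep m c 0) + \sum_(0 <= k < n) (-1) ^+ k.+1 * Pz m c n (Ep m c k.+1).
    by rewrite big_nat_recl // expr0 mul1r.
  rewrite hs hp; ring.
have eR := main_poly m c n hc0 hcm h2c n (leqnn n).
rewrite coef_right in eR.
have key : LHS = \sum_(0 <= k < n.+1) (-1) ^+ k * (n == m * Ep 3 1 k)%N%:R +
  \sum_(0 <= k < n.+1) (-1) ^+ k.+1 * (n == m * Em 3 1 k)%N%:R by rewrite eL eR.
have posc : forall k, n = (m * Ep 3 1 k)%N -> LHS = (-1) ^+ k.
  move=> k hk; rewrite key.
  rewrite (sum_delta n.+1 k (fun i => (-1) ^+ i) (fun i => n == m * Ep 3 1 i)%N); last first.
    - have := Ep_ge 3 1 k isT; rewrite ltnS hk => h; nia.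
    - by move=> i; rewrite hk eqn_pmul2l // Ep_inj eq_sym.
  rewrite (sum_zero n.+1 (fun i => (-1) ^+ i.+1) (fun i => n == m * Em 3 1 i)%N) ?addr0 //.
  by move=> i; rewrite hk eqn_pmul2l // Ep_Em.
have negc : forall k, n = (m * Em 3 1 k)%N -> LHS = (-1) ^+ k.+1.
  move=> k hk; rewrite key.
  rewrite (sum_delta n.+1 k (fun i => (-1) ^+ i.+1) (fun i => n == m * Em 3 1 i)%N); last first.
    - have := Em_ge 3 1 k isT; rewrite hk => h; nia.
    - by move=> i; rewrite hk eqn_pmul2l // Em_inj eq_sym.
  rewrite (sum_zero n.+1 (fun i => (-1) ^+ i) (fun i => n == m * Ep 3 1 i)%N) ?add0r //.
  by move=> i; rewrite hk eqn_pmul2l // eq_sym Ep_Em.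
have cases : forall j : int, n%:Z = m%:Z * pent j ->
   (exists2 k, j = k%:Z & n = (m * Ep 3 1 k)%N) \/ (exists2 k, j = - (k.+1)%:Z & n = (m * Em 3 1 k)%N).
  case=> k e.
    by left; exists k => //; move: e; rewrite pent_pos -PoszM => -[].
  by right; exists k; [rewrite NegzE | move: e; rewrite NegzE pent_neg -PoszM => -[]].
split; [|split].
- move=> j hj e; case: (cases j e) => -[k ej hk].
    by rewrite (posc k hk) -signr_odd; move: hj; rewrite ej dvdzE /= dvdn2 /=; case: (odd k).
  by rewrite (negc k hk) -signr_odd; move: hj; rewrite ej dvdzE /= dvdn2 /=; case: (odd k).
- move=> j hj e; case: (cases j e) => -[k ej hk].
    by rewrite (posc k hk) -signr_odd; move: hj; rewrite ej dvdzE /= dvdn2 /=; case: (odd k).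
  by rewrite (negc k hk) -signr_odd; move: hj; rewrite ej dvdzE /= dvdn2 /=; case: (odd k).
- move=> h; rewrite key.
  rewrite (sum_zero n.+1 (fun i => (-1) ^+ i) (fun i => n == m * Ep 3 1 i)%N); last first.
    by move=> i; apply/eqP => e; apply: (h i%:Z); rewrite pent_pos -PoszM e.
  rewrite (sum_zero n.+1 (fun i => (-1) ^+ i.+1) (fun i => n == m * Em 3 1 i)%N) ?addr0 //.
  by move=> i; apply/eqP => e; apply: (h (- (i.+1)%:Z)); rewrite pent_neg -PoszM e.
Qed.

Local Open Scope ring_scope.
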